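(* Let $l\in\mathbb N$, let $V_{l+1}=\{v_1,\dots,v_{l+1}\}$, and let $A$ be the adjacency matrix of a balanced tree $T\in\mathcal T_{V_{l+1}}$. Then the number of balanced trees $G\in\mathcal T_{V_{l+1}}$ with adjacency matrix $A(G)=A$ equals $$2l\prod_{i=1}^{l+1}(\operatorname{indeg}_T(v_i)-1)!.$$
   Context: For a finite ordered vertex set $V$ and $N\ge1$, a route through $V$ of length $N$ is a sequence $\mathbf i\in V^N$ whose set of entries equals $V$; its circuit multigraph $G_{\mathbf i}$ has vertex set $V$ and edges $1,\dots,N$ (own identity; parallel edges and loops allowed), edge $k<N$ from $i_k$ to $i_{k+1}$ and edge $N$ from $i_N$ to $i_1$; $\mathcal C_{V,N}$ is the set of all such graphs, and $G_{\mathbf i}$ is identified with its route $\mathbf i$ (so distinct routes give distinct graphs). A directed multigraph is balanced if its edges split into pairs $(e,e')$ with the head of $e$ equal to the tail of $e'$ and vice versa. $\mathcal T_{V_{l+1}}$ is the set of balanced $G\in\mathcal C_{V_{l+1},2l}$ (balanced trees). The adjacency matrix $A(G)$ has entry $A(G)_{v,w}$ equal to the number of edges from $v$ to $w$; $\operatorname{indeg}_T(v)$ is the number of edges with head $v$. *)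

(* Defs.v *)
From mathcomp Require Import all_boot all_order all_algebra all_fingroup.
Set Implicit Arguments. Unset Strict Implicit. Unset Printing Implicit Defensive.

(* Vertex set V = 'I_n (v_1,...,v_n are the ordinals 0..n-1, in order).
   A sequence i in V^N is a finite function 'I_N -> 'I_n; edge k (an element
   of 'I_N) goes from i_k to i_{k+1}, the last edge going back to i_1.
   The circuit multigraph G_i is identified with its route i. *)

Section Circuits.
Variables (n N : nat).
Implicit Type r : {ffun 'I_N -> 'I_n}.

Definition etail r (k : 'I_N) : 'I_n := r k.
Definition ehead r (k : 'I_N) : 'I_n := r (ordS k).

Definition is_route r : bool := (0 < N) && [forall v : 'I_n, v \in codom r].

(* balanced: the edges split into pairs (e, e'), e <> e', with
   head e = tail e' and tail e = head e'; encoded by a fixed-point-free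
   involution of the edge set *)
Definition is_balanced r : bool :=
  [exists p : {perm 'I_N}, [forall e : 'I_N,
     [&& p (p e) == e, p e != e,
         ehead r e == etail r (p e) & etail r e == ehead r (p e)]]].

Definition adjm r : 'M[nat]_n :=
  \matrix_(v, w) #|[set k : 'I_N | (etail r k == v) && (ehead r k == w)]|.

Definition indeg r (v : 'I_n) : nat := #|[set k : 'I_N | ehead r k == v]|.

End Circuits.

Definition balanced_trees (l : nat) : {set {ffun 'I_(2 * l) -> 'I_l.+1}} :=
  [set r | is_route r && is_balanced r].

(* Main.v *)
Require Import Defs.
From mathcomp Require Import all_boot all_order all_algebra all_fingroup.
From mathcomp Require Import zify.
Set Implicit Arguments. Unset Strict Implicit. Unset Printing Implicit Defensive.



Definition edges {V : eqType} (s : seq V) : seq (V * V) := zip s (rot 1 s).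

Lemma size_edges (V : eqType) (s : seq V) : size (edges s) = size s.
Proof. by rewrite /edges size_zip size_rot minnn. Qed.

Lemma edges_rot1 (V : eqType) (s : seq V) : edges (rot 1 s) = rot 1 (edges s).
Proof.
case: s => [|a [|b r]] //.
rewrite /edges.
have e1 : rot 1 [:: a, b & r] = rcons (b :: r) a by rewrite rot1_cons.
have e2 : rot 1 (rcons (b :: r) a) = rcons (rcons r a) b.
  by rewrite rcons_cons rot1_cons.
rewrite e1 e2 zip_rcons; last by rewrite size_rcons.
have e3 : zip [:: a, b & r] (rcons (b :: r) a) = (a, b) :: zip (b :: r) (rcons r a).
  by rewrite rcons_cons.
by rewrite e3 rot1_cons.
Qed.

Lemma edges_rot (V : eqType) k (s : seq V) : edges (rot k s) = rot k (edges s).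
Proof.
case: (leqP k (size s)) => hk; last first.
  by rewrite !rot_oversize ?size_edges // ltnW.
elim: k hk => [|k IH] hk; first by rewrite !rot0.
rewrite (rotS hk) edges_rot1 (IH (ltnW hk)).
by rewrite -(@rotS _ k (edges s)) // size_edges.
Qed.

Lemma edges_rotr (V : eqType) k (s : seq V) : edges (rotr k s) = rotr k (edges s).
Proof. by rewrite /rotr edges_rot size_edges. Qed.

Lemma edges_cons2 (V : eqType) (y x : V) t :
  edges [:: y, x, y & t] = (y, x) :: (x, y) :: edges (y :: t).
Proof. by rewrite /edges !rot1_cons. Qed.

Lemma unzip1_edges (V : eqType) (s : seq V) : unzip1 (edges s) = s.
Proof. by rewrite /edges unzip1_zip // size_rot. Qed.

Lemma mem_zip1 (S T : eqType) (s : seq S) (t : seq T) p : p \in zip s t -> p.1 \in s.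
Proof.
elim: s t => [|a s IH] [|b t] //=; rewrite inE => /orP [/eqP -> | /IH h].
  by rewrite /= eqxx.
by rewrite h orbT.
Qed.

Lemma mem_edges (V : eqType) (p : V * V) s : p \in edges s -> p.1 \in s.
Proof. exact: mem_zip1. Qed.

Lemma sum_count_mem (V : finType) (s : seq V) : \sum_(v : V) count_mem v s = size s.
Proof.
elim: s => [|a s IH] /=; first by rewrite big1.
rewrite big_split /= IH (bigD1 a) //= eqxx big1 ?addn0 // => v /negbTE.
by rewrite eq_sym => ->.
Qed.

Lemma sum_count_pair (V : finType) (E : seq (V * V)) y :
  \sum_(w : V) count_mem (y, w) E = count_mem y (unzip1 E).
Proof.
elim: E => [|[a b] E IH] /=; first by rewrite big1.
rewrite big_split /= IH; congr (_ + _).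
case: (eqVneq a y) => [->|ay].
  rewrite (bigD1 b) //= eqxx big1 // => w /negbTE.
  by rewrite xpair_eqE eqxx /= eq_sym => ->.
by rewrite big1 // => w _; rewrite xpair_eqE (negbTE ay).
Qed.

Lemma ohead_rot (T : Type) (x0 : T) (l : seq T) k : k < size l ->
  ohead (rot k l) = Some (nth x0 l k).
Proof. by move=> hk; rewrite /rot (drop_nth x0 hk). Qed.

Lemma count_sum_nth (T : eqType) (l : seq T) (a : pred T) (x0 : T) :
  count a l = \sum_(k < size l) a (nth x0 l k).
Proof.
rewrite -{1}(mkseq_nth x0 l) /mkseq count_map -sum1_count.
rewrite big_mkcond /= -(big_mkord xpredT (fun k => (a (nth x0 l k) : nat))).
by rewrite /index_iota subn0; apply: eq_bigr => i _; case: (a _).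
Qed.


Definition tours {V : finType} N (E : seq (V * V)) : {set N.-tuple V} :=
  [set t : N.-tuple V | perm_eq (edges t) E].
Definition starts {V : eqType} (e : V * V) (t : seq V) : bool :=
  ohead (edges t) == Some e.

Lemma sum_card (T : finType) (A : {set T}) (P : pred T) :
  \sum_(t in A) (P t : nat) = #|[set t in A | P t]|.
Proof.
rewrite -sum1_card big_mkcond [RHS]big_mkcond; apply: eq_bigr => t _.
by rewrite !inE; case: (t \in A); case: (P t).
Qed.

Lemma rot_count (V : finType) N (E : seq (V * V)) e :
  N * #|[set t in tours N E | starts e t]| = #|tours N E| * count_mem e E.
Proof.
have key : forall t : N.-tuple V,
    count_mem e (edges t) = \sum_(k < N) (starts e (rot k t) : nat).
  move=> t; rewrite (count_sum_nth _ _ e) size_edges size_tuple.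
  apply: eq_bigr => k _.
  by rewrite /starts edges_rot (ohead_rot e) ?size_edges ?size_tuple.
transitivity (\sum_(t in tours N E) count_mem e E); last by rewrite sum_nat_const.
transitivity (\sum_(t in tours N E) \sum_(k < N) (starts e (rot k t) : nat)); last first.
  by apply: eq_bigr => t; rewrite inE => /seq.permP h; rewrite -key h.
rewrite exchange_big /=.
transitivity (\sum_(k < N) #|[set t in tours N E | starts e t]|).
  by rewrite sum_nat_const card_ord.
apply: eq_bigr => k _; rewrite sum_card.
have -> : [set t in tours N E | starts e (rot k t)] =
          (@rot_tuple N k V) @^-1: [set t in tours N E | starts e t].
  by apply/setP => t; rewrite !inE /= edges_rot perm_rot.
rewrite card_preimset // => t1 t2 /(congr1 val) /= /rot_inj; exact: val_inj.
Qed.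


Lemma mem_zip2 (S T : eqType) (s : seq S) (t : seq T) p : p \in zip s t -> p.2 \in t.
Proof.
elim: s t => [|a s IH] [|b t] //=; rewrite inE => /orP [/eqP -> | /IH h].
  by rewrite /= eqxx.
by rewrite h orbT.
Qed.

Lemma mem_edges2 (V : eqType) (p : V * V) s : p \in edges s -> p.2 \in s.
Proof. by move/mem_zip2; rewrite mem_rot. Qed.

Lemma edges_cons (V : eqType) (a b : V) l :
  edges [:: a, b & l] = (a, b) :: zip (b :: l) (rcons l a).
Proof. by rewrite /edges rot1_cons. Qed.

Lemma pigeon (V : finType) (s : seq V) :
  size s < #|[set v in s]|.*2 -> exists x, count_mem x s = 1.
Proof.
move=> h.
suff /existsP [x /eqP hx] : [exists x, count_mem x s == 1] by exists x.
apply: contraTT h => /existsPn hn.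
rewrite -leqNgt -sum_count_mem.
have -> : \sum_(v : V) count_mem v s = \sum_(v in [set v in s]) count_mem v s.
  rewrite [RHS]big_mkcond; apply: eq_bigr => v _; rewrite inE.
  by case: ifP => // /negbT /count_memPn.
rewrite -muln2 -sum_nat_const; apply: leq_sum => v; rewrite inE => vs.
have := hn v; have : 0 < count_mem v s by rewrite -has_count has_pred1.
by case: (count_mem v s) => [|[|]].
Qed.

Definition symE {V : eqType} (s : seq V) :=
  forall v w, count_mem (v, w) (edges s) = count_mem (w, v) (edges s).

Definition concl {V : finType} n (s : seq V) :=
  [/\ #|tours n.+2 (edges s)| = n.+2 * \prod_(v : V) (count_mem v s).-1`!,
      uniq (edges s) & all (fun p : V * V => p.1 != p.2) (edges s)].

Definition hyps {V : finType} n (s : seq V) :=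
  [/\ size s = n.+2, ~~ odd n, symE s & #|[set v in s]| = n./2.+2].

Lemma hyps_perm (V : finType) n (s s1 : seq V) :
  perm_eq s1 s -> perm_eq (edges s1) (edges s) -> hyps n s -> hyps n s1.
Proof.
move=> p1 p2 [h1 h2 h3 h4]; split => //.
- by rewrite (perm_size p1).
- by move=> v w; rewrite !(seq.permP p2).
- rewrite -h4; apply: eq_card => v; rewrite !inE; exact: perm_mem.
Qed.

Lemma concl_perm (V : finType) n (s s1 : seq V) :
  perm_eq s1 s -> perm_eq (edges s1) (edges s) -> concl n s1 -> concl n s.
Proof.
move=> p1 p2 [h1 h2 h3]; split.
- have -> : tours n.+2 (edges s) = tours n.+2 (edges s1).
    have p2' : perm_eq (edges s) (edges s1) by rewrite perm_sym.
    apply/setP => t; rewrite !inE.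
    by apply/idP/idP => h; [exact: perm_trans h p2' | exact: perm_trans h p2].
  rewrite h1; congr (_ * _); apply: eq_bigr => v _; by rewrite (seq.permP p1).
- by rewrite -(perm_uniq p2).
- by rewrite -(perm_all _ p2).
Qed.


Lemma some_eq (T : eqType) (a b : T) : (Some a == Some b) = (a == b).
Proof. by apply/eqP/eqP => [[]|->]. Qed.

Lemma edges_cons3 (V : eqType) (y x c : V) r :
  edges [:: y, x, c & r] = (y, x) :: (x, c) :: zip (c :: r) (rcons r y).
Proof. by rewrite /edges rot1_cons. Qed.

Lemma prod_step (V : finType) (y x : V) t : x != y -> x \notin t -> y \in t ->
  \prod_(v : V) (count_mem v [:: y, x & t]).-1`! =
  (\prod_(v : V) (count_mem v t).-1`!) * count_mem y t.
Proof.
move=> xy xt yt.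
have hc : 0 < count_mem y t by rewrite -has_count has_pred1.
have Ex' : count_mem x t = 0 by apply/count_memPn.
transitivity (\prod_(v : V) ((count_mem v t).-1`! * (if v == y then count_mem y t else 1))).
  apply: eq_bigr => v _; case: (eqVneq v y) => [->|vy].
    rewrite /= ?eqxx (negbTE xy) add1n add0n.
    by move: hc; case: (count_mem y t) => // c _; rewrite factS mulnC.
  case: (eqVneq v x) => [->|vx].
    by rewrite /= eqxx eq_sym (negbTE xy) Ex' muln1.
  by rewrite /= muln1 eq_sym (negbTE vy) eq_sym (negbTE vx).
rewrite big_split /=; congr (_ * _); rewrite (bigD1 y) //= ?eqxx big1 ?muln1 // => v /negbTE ->.
by [].
Qed.


Lemma core (V : finType) n
  (IH : forall m, m < n -> forall s : seq V, hyps m s -> concl m s)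
  (y x : V) r : hyps n [:: y, x & r] -> count_mem x [:: y, x & r] = 1 ->
  concl n [:: y, x & r].
Proof.
move=> [hsz hodd hsym hcard] hx1.
have [xy xr] : x != y /\ x \notin r.
  move: hx1 => /=; rewrite eqxx; case: (eqVneq y x) => [_|yx] /= h; first lia.
  split => //.
  by apply/count_memPn; move: h; rewrite add0n add1n => -[].
case: r hsz hsym hcard hx1 xr => [|c r2] hsz hsym hcard hx1 xr.
  have n0 : n = 0 by case: hsz.
  subst n.
  have E : edges [:: y; x] = [:: (y, x); (x, y)] by rewrite /edges rot1_cons.
  have hne : (x, y) != (y, x) by rewrite xpair_eqE (negbTE xy).
  split; rewrite E.
  - have := rot_count 2 [:: (y, x); (x, y)] (y, x).
    have -> : [set t in tours 2 [:: (y, x); (x, y)] | starts (y, x) t] =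
              [set ([tuple y; x] : 2.-tuple V)].
      apply/setP => t; rewrite !inE; apply/idP/eqP.
        case/tupleP: t => a t; case/tupleP: t => b t.
        rewrite tuple0 => /andP [_]; rewrite /starts /= some_eq => /eqP [-> ->].
        by apply: val_inj.
      move=> ->; apply/andP; split; first exact: perm_refl.
      exact: eqxx.
    rewrite cards1 /= eqxx (negbTE hne) !muln1 => <-.
    rewrite big1 // => v _.
    by case: (eqVneq y v) => [<-|_]; [rewrite (negbTE xy) | case: (x == v)].
  - by rewrite /= andbT mem_seq1 eq_sym hne.
  - by rewrite /= eq_sym xy.
have hyx : (y, x) \in edges [:: y, x, c & r2] by rewrite edges_cons3 inE eqxx.
have hxy' : (x, y) \in edges [:: y, x, c & r2].
  by rewrite -has_pred1 has_count hsym -has_count has_pred1.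
have ec : c = y.
  move: hxy'; rewrite edges_cons3 !inE => /or3P [| |].
  - by rewrite xpair_eqE (negbTE xy).
  - by rewrite xpair_eqE eqxx /= => /eqP.
  - by move/mem_zip1 => /=; rewrite (negbTE xr).
subst c.
case: n IH hsz hodd hcard => [|[|m]] IH hsz hodd hcard.
- by move: hsz => /=; lia.
- by [].
set t := y :: r2.
have htsz : size t = m.+2 by move: hsz => /= [->].
have hE : edges [:: y, x & t] = (y, x) :: (x, y) :: edges t := edges_cons2 y x r2.
have yt : y \in t by rewrite inE eqxx.
have xt : x \notin t := xr.
have n1 : (y, x) \notin edges t by apply/negP => /mem_edges2 /=; apply/negP.
have n2 : (x, y) \notin edges t by apply/negP => /mem_edges /=; apply/negP.
have ht : hyps m t.
  split => //.
  - by move: hodd => /=; rewrite !negbK.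
  - move=> v w; have := hsym v w; rewrite hE /= !xpair_eqE.
    rewrite [(x == w) && _]andbC [(y == w) && _]andbC.
    lia.
  - have hs : [set v in [:: y, x & t]] = x |: [set v in t].
      apply/setP => v; rewrite !inE; case: (eqVneq v y) => [->|] //=.
      by rewrite orbT.
    move: hcard; rewrite hs cardsU1 inE xt /=; lia.
have [IH1 IH2 IH3] := IH m (leqW (leqnn _)) t ht.
split.
- set E' := edges t.
  have hrc := rot_count m.+4 ((y, x) :: (x, y) :: E') (y, x).
  rewrite /= eqxx xpair_eqE (negbTE xy) /= (count_memPn n1) muln1 in hrc.
  have hS : #|[set u in tours m.+4 [:: (y, x), (x, y) & E'] | starts (y, x) u]| =
            #|[set t' in tours m.+2 E' | ohead t' == Some y]|.
    pose f := fun t' : m.+2.-tuple V => cons_tuple y (cons_tuple x t').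
    have finj : injective f.
      by move=> a b /(congr1 val) /= [] /val_inj.
    rewrite -(card_imset _ finj); apply: eq_card => u; rewrite !inE.
    apply/andP/imsetP.
    + move=> [hu hs]; move: hs hu.
      case/tupleP: u => a u; case/tupleP: u => b u.
      rewrite /starts /= edges_cons /= some_eq => /eqP [-> ->].
      case/tupleP: u => c u /=.
      move=> hu.
      have hxc : (x, c) \in [:: (y, x), (x, y) & E'].
        by rewrite -(perm_mem hu) !inE eqxx orbT.
      have ec : c = y.
        move: hxc; rewrite !inE => /or3P [| |].
        - by rewrite xpair_eqE (negbTE xy).
        - by rewrite xpair_eqE eqxx /= => /eqP.
        - by move/mem_edges => /=; rewrite (negbTE xt).
      subst c.
      exists (cons_tuple y u); last by apply: val_inj.
      rewrite inE /= eqxx andbT.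
      by move: hu; rewrite !perm_cons inE -rot1_cons.
    + case=> t'; rewrite inE => /andP [ht' hh] ->.
      move: ht' hh; case/tupleP: t' => c w ht' /=; rewrite some_eq => /eqP ec.
      subst c; split.
        by rewrite edges_cons2 !perm_cons; move: ht'; rewrite inE.
      by rewrite /starts edges_cons /= eqxx.
  have hsum : #|[set t' in tours m.+2 E' | ohead t' == Some y]| =
              \sum_(w : V) #|[set t' in tours m.+2 E' | starts (y, w) t']|.
    rewrite -sum_card.
    under [RHS]eq_bigr => w _ do rewrite -sum_card.
    rewrite [RHS]exchange_big /=; apply: eq_bigr => t' _.
    case/tupleP: t' => a u; case/tupleP: u => b u.
    rewrite /starts /= some_eq.
    have h := sum_count_pair [:: (a, b)] y; simpl in h.
    rewrite -[nat_of_bool (a == y)]addn0 -h.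
    apply: eq_bigr => w _; by rewrite some_eq addn0.
  have hw : forall w, #|[set t' in tours m.+2 E' | starts (y, w) t']| =
             (\prod_(v : V) (count_mem v t).-1`!) * count_mem (y, w) E'.
    move=> w; have := rot_count m.+2 E' (y, w).
    by rewrite IH1 -mulnA => /eqP; rewrite eqn_pmul2l // => /eqP.
  rewrite hE -hrc hS hsum (eq_bigr _ (fun w _ => hw w)) -big_distrr.
  by rewrite sum_count_pair unzip1_edges prod_step.

- rewrite hE /= inE negb_or n1 n2 IH2 xpair_eqE (negbTE xy) /=.
  by rewrite andbF.
- by rewrite hE /= IH3 xy eq_sym xy.
Qed.



Lemma main (V : finType) n : forall s : seq V, hyps n s -> concl n s.
Proof.
elim/ltn_ind: n => n IH s hs.
have [hsz hodd hsym hcard] := hs.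
have [x hx1] : exists x, count_mem x s = 1.
  apply: pigeon; rewrite hcard hsz.
  have h2 := odd_double_half n; rewrite (negbTE hodd) add0n in h2.
  lia.
have xs : x \in s by rewrite -has_pred1 has_count hx1.
case: (rot_to xs) => i s' hrot.
have hs' : size s' = n.+1.
  by move: (size_rot i s); rewrite hrot hsz /= => -[].
case/lastP: s' hrot hs' => [|r z] hrot hs' //.
have e1 : rotr 1 (rot i s) = [:: z, x & r] by rewrite hrot -rcons_cons rotr1_rcons.
have p1 : perm_eq [:: z, x & r] s by rewrite -e1 perm_rotr perm_rot perm_refl.
have p2 : perm_eq (edges [:: z, x & r]) (edges s).
  by rewrite -e1 edges_rotr edges_rot perm_rotr perm_rot perm_refl.
apply: (concl_perm p1 p2).
apply: core => //; first exact: (hyps_perm p1 p2 hs).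
by rewrite (seq.permP p1).
Qed.



Lemma main' (V : finType) N (s : seq V) : size s = N -> 0 < N -> ~~ odd N ->
  symE s -> #|[set v in s]| = N./2.+1 ->
  [/\ #|tours N (edges s)| = N * \prod_(v : V) (count_mem v s).-1`!,
      uniq (edges s) & all (fun p : V * V => p.1 != p.2) (edges s)].
Proof.
case: N => [|[|n]] // hsz _ hodd hsym hcard.
apply: main; split => //.
by move: hodd => /=; rewrite !negbK.
Qed.

Lemma rot1_enum N : rot 1 (enum 'I_N) = map (@ordS N) (enum 'I_N).
Proof.
apply: (inj_map val_inj); rewrite map_rot val_enum_ord -map_comp.
have -> : [seq (val \o @ordS N) i | i <- enum 'I_N] =
          [seq i.+1 %% N | i <- iota 0 N].
  by rewrite -val_enum_ord -map_comp.
case: N => [|N] //.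
have e0 : iota 0 N.+1 = 0 :: iota 1 N by [].
have e1 : iota 0 N.+1 = rcons (iota 0 N) N.
  by rewrite -cats1 -[[:: N]]/(iota (0 + N) 1) -iotaD addn1.
rewrite [in LHS]e0 rot1_cons [in RHS]e1 map_rcons modnn.
congr rcons.
rewrite (iotaDl 1 0).
apply/eq_in_map => i; rewrite mem_iota add0n => /andP [_ hi].
by rewrite modn_small ?add1n.
Qed.

Lemma zip_rot_map (T : Type) (U : eqType) (f : T -> U) (g : T -> T) (e : seq T) :
  rot 1 e = map g e -> zip (map f e) (rot 1 (map f e)) = map (fun k => (f k, f (g k))) e.
Proof. by move=> h; rewrite -map_rot h -map_comp zip_map. Qed.

Lemma edges_codom N n (G : {ffun 'I_N -> 'I_n}) :
  edges (codom G) = map (fun k => (G k, G (ordS k))) (enum 'I_N).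
Proof. rewrite /edges codomE; apply: zip_rot_map; exact: rot1_enum. Qed.

Lemma card_count (T : finType) (P : pred T) :
  #|[set k | P k]| = count P (enum T).
Proof.
rewrite -sum1_card -sum1_count big_enum_cond; apply: eq_bigl => k.
by rewrite inE.
Qed.

Lemma adjmE N n (G : {ffun 'I_N -> 'I_n}) v w :
  adjm G v w = count_mem (v, w) (edges (codom G)).
Proof.
rewrite mxE edges_codom count_map card_count; apply: eq_count => k.
by rewrite /= /etail /ehead xpair_eqE.
Qed.



Lemma indegE N n (G : {ffun 'I_N -> 'I_n}) v : indeg G v = count_mem v (codom G).
Proof.
have hp : perm_eq (rot 1 (codom G)) (codom G) by rewrite perm_rot.
have e : rot 1 (codom G) = map (fun k => G (ordS k)) (enum 'I_N).
  have := congr1 unzip2 (edges_codom G).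
  rewrite /edges unzip2_zip ?size_rot // => ->.
  by elim: (enum 'I_N) => //= a r ->.
rewrite /indeg card_count -(seq.permP hp) e [RHS]count_map.
by [].
Qed.

Lemma bal_le N n (G : {ffun 'I_N -> 'I_n}) : is_balanced G ->
  forall v w, adjm G v w <= adjm G w v.
Proof.
case/existsP => p /forallP hp v w; rewrite !mxE.
rewrite -(card_imset _ (@perm_inj _ p)); apply: subset_leq_card.
apply/subsetP => k' /imsetP [k]; rewrite inE => /andP [/eqP hv /eqP hw] ->.
rewrite inE; have := hp k; case/and4P => _ _ /eqP h1 /eqP h2.
by rewrite -h1 -h2 hv hw !eqxx.
Qed.

Lemma route_of N n (G T : {ffun 'I_N -> 'I_n}) : 0 < N ->
  [forall v, v \in codom T] -> perm_eq (edges (codom G)) (edges (codom T)) ->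
  is_route G.
Proof.
move=> hN hall hp; rewrite /is_route hN /=; apply/forallP => v.
have : v \in codom T := forallP hall v.
rewrite -{1}(unzip1_edges (codom T)) => /mapP [[a b] hab /= ->].
have : (a, b) \in edges (codom G) by rewrite (perm_mem hp).
by move/mem_edges.
Qed.

Lemma bal_of N n (G : {ffun 'I_N -> 'I_n}) : uniq (edges (codom G)) ->
  all (fun p : 'I_n * 'I_n => p.1 != p.2) (edges (codom G)) -> symE (codom G) ->
  is_balanced G.
Proof.
move=> hu hl hs.
pose e := fun k : 'I_N => (G k, G (ordS k)).
have he : edges (codom G) = map e (enum 'I_N) := edges_codom G.
have einj : injective e.
  apply/injectiveP; move: hu; rewrite he; exact.
have ex : forall k, exists j, e j = (G (ordS k), G k).
  move=> k; have : (G (ordS k), G k) \in edges (codom G).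
    rewrite -has_pred1 has_count hs -has_count has_pred1 he.
    by apply: (map_f e); rewrite mem_enum.
  by rewrite he => /mapP [j _ hj]; exists j.
pose pf k := odflt k [pick j | e j == (G (ordS k), G k)].
have hpf : forall k, e (pf k) = (G (ordS k), G k).
  move=> k; rewrite /pf; case: pickP => [j /eqP //|hn].
  by have [j hj] := ex k; move: (hn j); rewrite hj eqxx.
have pfK : involutive pf.
  move=> k; apply: einj; move: (hpf k) => -[h1 h2].
  by rewrite hpf h1 h2.
have pfinj : injective pf := inv_inj pfK.
apply/existsP; exists (perm pfinj); apply/forallP => k; rewrite !permE.
move: (hpf k) => -[h1 h2].
apply/and4P; split.
- by rewrite pfK.
- apply/eqP => hk.
  have : e k \in edges (codom G) by rewrite he map_f ?mem_enum.
  move/(allP hl) => /=; rewrite hk in h1; by rewrite h1 eqxx.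
- by rewrite /ehead /etail h1.
- by rewrite /ehead /etail h2.
Qed.

Unset Implicit Arguments.

Theorem lemma3p10 (l : nat) (T : {ffun 'I_(2 * l) -> 'I_l.+1}) :
  T \in balanced_trees l ->
  #|[set G in balanced_trees l | adjm G == adjm T]| =
    (2 * l * \prod_(v : 'I_l.+1) ((indeg T v).-1)`!)%N.
Proof.
rewrite inE => /andP [/andP [hN hall] hbal].
set s := codom T.
have hsym : symE s.
  by move=> v w; rewrite -!adjmE; apply/eqP; rewrite eqn_leq !bal_le.
have hsz : size s = 2 * l by rewrite size_codom card_ord.
have hodd : ~~ odd (2 * l) by rewrite mul2n odd_double.
have hcard : #|[set v in s]| = (2 * l)./2.+1.
  have -> : [set v in s] = [set: 'I_l.+1].
    by apply/setP => v; rewrite !inE (forallP hall v).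
  by rewrite cardsT card_ord mul2n doubleK.
have [hcnt hu hl] := main' hsz hN hodd hsym hcard.
have hset : [set G in balanced_trees l | adjm G == adjm T] =
            [set G : {ffun 'I_(2 * l) -> 'I_l.+1} | perm_eq (edges (codom G)) (edges s)].
  apply/setP => G; rewrite !inE.
  have eqA : (adjm G == adjm T) = perm_eq (edges (codom G)) (edges s).
    apply/eqP/idP => [hA | hp].
    - rewrite /perm_eq; apply/allP => -[v w] _; apply/eqP.
      by rewrite -!adjmE hA.
    - by apply/matrixP => v w; rewrite !adjmE (seq.permP hp).
  rewrite eqA; case hp: (perm_eq _ _); rewrite ?andbF // andbT.
  apply/andP; split; first exact: route_of hN hall hp.
  apply: bal_of.
  - by rewrite (perm_uniq hp).
  - by rewrite (perm_all _ hp).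
  - by move=> v w; rewrite !(seq.permP hp) hsym.
rewrite hset.
pose mk := fun G : {ffun 'I_(2 * l) -> 'I_l.+1} => [tuple G i | i < 2 * l].
have mkinj : injective mk.
  move=> G1 G2 h; apply/ffunP => i.
  by have := congr1 (fun t => tnth t i) h; rewrite /= !tnth_mktuple.
have hmk : forall G, val (mk G) = codom G.
  by move=> G; rewrite /= codomE enumT.
have htours : tours (2 * l) (edges s) =
              mk @: [set G : {ffun 'I_(2 * l) -> 'I_l.+1} | perm_eq (edges (codom G)) (edges s)].
  apply/setP => t; apply/idP/imsetP.
  - move=> ht.
    have emk : mk [ffun i => tnth t i] = t.
      by apply: eq_from_tnth => i; rewrite tnth_mktuple ffunE.
    exists [ffun i => tnth t i]; last by rewrite emk.
    by rewrite inE -hmk emk; rewrite inE in ht.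
  - by case=> G; rewrite inE => hG ->; rewrite inE hmk.
rewrite -(card_imset _ mkinj) -htours hcnt; congr (_ * _).
by apply: eq_bigr => v _; rewrite indegE.
Qed.
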